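(* For every Hamming graph $H(d,q)$, the VC-dimension of the edge relation on $H(d,q)$ is at most $3$.
   Context: For $d,q\in\mathbb N$ and a set $S$ with $|S|=q$, the Hamming graph $H(d,q)$ has vertex set $S^d$, two vertices adjacent iff they agree in all but exactly one coordinate. The VC-dimension of the edge relation on a graph $G$ is the largest size of a set $A\subseteq V(G)$ such that $\{A\cap N(v)\mid v\in V(G)\}$ equals the power set of $A$, where $N(v)$ is the set of vertices adjacent to $v$. *)

(* Defs.v *)
From mathcomp Require Import all_boot.
Set Implicit Arguments. Unset Strict Implicit. Unset Printing Implicit Defensive.

(* Vertices of the Hamming graph H(d,q) over alphabet S (|S| = q): S^d. *)
Definition hvertex (d : nat) (S : finType) := {ffun 'I_d -> S}.

Definition hamming_adj (d : nat) (S : finType) (u v : hvertex d S) : bool :=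
  #|[set i : 'I_d | u i != v i]| == 1.

Definition hnbhd (d : nat) (S : finType) (v : hvertex d S) : {set hvertex d S} :=
  [set u | hamming_adj u v].

Definition edge_shattered (d : nat) (S : finType) (A : {set hvertex d S}) : Prop :=
  forall B : {set hvertex d S}, B \subset A ->
    exists v : hvertex d S, A :&: hnbhd v = B.

(* Main.v *)
Require Import Defs.
From mathcomp Require Import all_boot.
Set Implicit Arguments. Unset Strict Implicit.

Section H.
Variables (d : nat) (S : finType).
Implicit Types (a b c u v w x y z t : hvertex d S).

Lemma adjE u v : hamming_adj u v -> exists i, forall k, (u k != v k) = (k == i).
Proof.
rewrite /hamming_adj => /cards1P [i Hi]; exists i => k.
by move/setP/(_ k): Hi; rewrite !inE.
Qed.

Lemma adjI u v i : (forall k, (u k != v k) = (k == i)) -> hamming_adj u v.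
Proof.
move=> H; rewrite /hamming_adj.
have -> : [set k | u k != v k] = [set i] by apply/setP => k; rewrite !inE H.
by rewrite cards1.
Qed.

Lemma vext u v : (forall k, u k = v k) -> u = v.
Proof. by move=> H; apply/ffunP. Qed.

Lemma cn x y w : hamming_adj x w -> hamming_adj y w -> ~~ hamming_adj x y ->
  x != y -> exists i j, (forall k, (x k != y k) = (k == i) || (k == j)) /\
    (forall k, w k = if k == i then y k else x k).
Proof.
move=> /adjE [i Hi] /adjE [j Hj] nxy ne.
have Hx k : k != i -> x k = w k by move=> nk; apply/eqP; rewrite -[_ == _]negbK Hi (negbTE nk).
have Hy k : k != j -> y k = w k by move=> nk; apply/eqP; rewrite -[_ == _]negbK Hj (negbTE nk).
case: (eqVneq i j) => [eij|nij].
  subst j; case: (eqVneq (x i) (y i)) => [exy|nexy].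
    case/eqP: ne; apply: vext => k; case: (eqVneq k i) => [->//|nk].
    by rewrite Hx // Hy.
  case/negP: nxy; apply: (adjI (i:=i)) => k; case: (eqVneq k i) => [->|nk].
    by rewrite nexy.
  by rewrite Hx // Hy // eqxx.
exists i, j; split.
  move=> k; case: (eqVneq k i) => [->|nki] /=.
    by rewrite (Hy i nij); rewrite Hi eqxx.
  case: (eqVneq k j) => [->|nkj] /=.
    have nji : j != i by rewrite eq_sym.
    by rewrite (Hx j nji) eq_sym Hj eqxx.
  by rewrite Hx // Hy // eqxx.
move=> k; case: (eqVneq k i) => [->|nki].
  by rewrite (Hy i nij).
by rewrite Hx.
Qed.

Lemma third a b c i : (forall k, (a k != b k) = (k == i)) ->
  hamming_adj a c -> hamming_adj b c -> forall k, k != i -> a k = c k.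
Proof.
move=> Hab /adjE [i' Hi'] /adjE [j Hj].
case: (eqVneq i' i) => [<-|ne].
  by move=> k nk; apply/eqP; rewrite -[_ == _]negbK Hi' (negbTE nk).
exfalso.
have h1 : b i != c i.
  have : a i != b i by rewrite Hab.
  have : a i == c i by rewrite -[_ == _]negbK Hi' eq_sym (negbTE ne).
  by move/eqP => ->; rewrite eq_sym.
have h2 : b i' != c i'.
  have : a i' == b i' by rewrite -[_ == _]negbK Hab (negbTE ne).
  move/eqP => <-; by rewrite Hi'.
by move: h1 h2; rewrite !Hj => /eqP e1 /eqP e2; rewrite e1 e2 eqxx in ne.
Qed.

End H.

Lemma wit d S (A : {set hvertex d S}) (X : {set hvertex d S}) : edge_shattered A -> X \subset A ->
  exists w, forall x, x \in A -> hamming_adj x w = (x \in X).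
Proof.
move=> sh sub; have [v Hv] := sh X sub; exists v => x xA.
by rewrite -Hv !inE xA.
Qed.

Lemma sub2 {T : finType} (A : {set T}) x y : x \in A -> y \in A -> [set x; y] \subset A.
Proof. by move=> ? ?; apply/subsetP => u; rewrite !inE => /orP [] /eqP ->. Qed.
Lemma sub3 {T : finType} (A : {set T}) x y z : x \in A -> y \in A -> z \in A -> [set x; y; z] \subset A.
Proof. by move=> ? ? ?; apply/subsetP => u; rewrite !inE => /orP [/orP [] | ] /eqP ->. Qed.

Lemma caseP d S (A : {set hvertex d S}) x y z t : edge_shattered A ->
  x \in A -> y \in A -> z \in A -> t \in A -> x != y -> z != x -> z != y ->
  t != x -> t != y -> z != t -> ~~ hamming_adj x y -> False.
Proof.
move=> sh xA yA zA tA nxy nzx nzy ntx nty nzt nadj.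
have [w1 H1] := @wit _ _ A [set x; y] sh (sub2 xA yA).
have [w2 H2] := @wit _ _ A [set x; y; z] sh (sub3 xA yA zA).
have [w3 H3] := @wit _ _ A [set x; y; t] sh (sub3 xA yA tA).
have a1x : hamming_adj x w1 by rewrite H1 // !inE eqxx.
have a1y : hamming_adj y w1 by rewrite H1 // !inE eqxx orbT.
have a2x : hamming_adj x w2 by rewrite H2 // !inE eqxx.
have a2y : hamming_adj y w2 by rewrite H2 // !inE eqxx !orbT.
have a3x : hamming_adj x w3 by rewrite H3 // !inE eqxx.
have a3y : hamming_adj y w3 by rewrite H3 // !inE eqxx !orbT.
have [i1 [j1 [D1 F1]]] := cn a1x a1y nadj nxy.
have [i2 [j2 [D2 F2]]] := cn a2x a2y nadj nxy.
have [i3 [j3 [D3 F3]]] := cn a3x a3y nadj nxy.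
have m2 : (i2 == i1) || (i2 == j1) by rewrite -D1 D2 eqxx.
have m3 : (i3 == i1) || (i3 == j1) by rewrite -D1 D3 eqxx.
have c1z : hamming_adj z w1 = false by rewrite H1 // !inE (negbTE nzx) (negbTE nzy).
have c1t : hamming_adj t w1 = false by rewrite H1 // !inE (negbTE ntx) (negbTE nty).
have c2z : hamming_adj z w2 by rewrite H2 // !inE eqxx !orbT.
have c3t : hamming_adj t w3 by rewrite H3 // !inE eqxx !orbT.
have c3z : hamming_adj z w3 = false by rewrite H3 // !inE (negbTE nzx) (negbTE nzy) (negbTE nzt).
case/orP: m2 => [/eqP e2|/eqP e2].
  have e : w1 = w2 by apply: vext => k; rewrite F1 F2 e2.
  by rewrite e c2z in c1z.
case/orP: m3 => [/eqP e3|/eqP e3].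
  have e : w1 = w3 by apply: vext => k; rewrite F1 F3 e3.
  by rewrite e c3t in c1t.
have e : w2 = w3 by apply: vext => k; rewrite F2 F3 e2 e3.
by rewrite e c3z in c2z.
Qed.

Lemma caseQ d S (a b c dd w : hvertex d S) : hamming_adj a b -> hamming_adj a c ->
  hamming_adj b c -> hamming_adj a dd -> hamming_adj b dd -> hamming_adj a w ->
  hamming_adj b w -> ~~ hamming_adj c w -> ~~ hamming_adj dd w -> c != dd -> False.
Proof.
move=> ab ac bc ad bd aw bw ncw ndw ncd.
have [i Hi] := adjE ab.
have Tc := third Hi ac bc; have Td := third Hi ad bd; have Tw := third Hi aw bw.
have onl (e : hvertex d S) : (forall k, k != i -> a k = e k) -> ~~ hamming_adj e w -> e = w.
  move=> Te new; apply: vext => k.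
  case: (eqVneq k i) => [->|nk]; last by rewrite -Te // Tw.
  apply/eqP; apply: contraNT new => ne; apply: (adjI (i:=i)) => k'.
  case: (eqVneq k' i) => [->//|nk']; by rewrite -Te // Tw // eqxx.
by case/eqP: ncd; rewrite (onl _ Tc ncw) (onl _ Td ndw).
Qed.

Theorem mainTheorem16 (d : nat) (S : finType) (A : {set hvertex d S}) :
  edge_shattered A -> #|A| <= 3.
Proof.
move=> sh; rewrite leqNgt; apply/negP => H.
have Hu := enum_uniq (mem A); have Hm := mem_enum (mem A).
rewrite cardE in H; move: Hu Hm H.
case: (enum (mem A)) => [|a [|b [|c [|dd s]]]] //= Hu Hm _.
have aA : a \in A by rewrite -Hm !inE eqxx.
have bA : b \in A by rewrite -Hm !inE eqxx !orbT.
have cA : c \in A by rewrite -Hm !inE eqxx !orbT.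
have dA : dd \in A by rewrite -Hm !inE eqxx !orbT.
rewrite !inE !negb_or in Hu.
case/and5P: Hu => /and4P [nab nac nad _] /and3P [nbc nbd _] /andP [ncd _] _ _.
have nba : b != a by rewrite eq_sym.
have nca : c != a by rewrite eq_sym.
have nda : dd != a by rewrite eq_sym.
have ncb : c != b by rewrite eq_sym.
have ndb : dd != b by rewrite eq_sym.
have ndc : dd != c by rewrite eq_sym.
case ab: (hamming_adj a b); last by apply: (caseP sh aA bA cA dA) => //; rewrite ab.
case ac: (hamming_adj a c); last by apply: (caseP sh aA cA bA dA) => //; rewrite ac.
case bc: (hamming_adj b c); last by apply: (caseP sh bA cA aA dA) => //; rewrite bc.
case ad: (hamming_adj a dd); last by apply: (caseP sh aA dA bA cA) => //; rewrite ad.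
case bd: (hamming_adj b dd); last by apply: (caseP sh bA dA aA cA) => //; rewrite bd.
have [w Hw] := wit sh (sub2 aA bA).
apply: (caseQ ab ac bc ad bd (w := w) _ _ _ _ ncd).
- by rewrite Hw // !inE eqxx.
- by rewrite Hw // !inE eqxx orbT.
- by rewrite Hw // !inE (negbTE nca) (negbTE ncb).
- by rewrite Hw // !inE (negbTE nda) (negbTE ndb).
Qed.
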